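(* Let $m\ge1$, $n\ge2$, let $\lvert\phi\rangle\in(\mathbb{C}^d)^{\otimes m}$ be a unit vector, and let $\lvert\psi\rangle\in(\mathbb{C}^d)^{\otimes n}$ be a unit vector with Schmidt decomposition $\lvert\psi\rangle=\sum_{i=1}^d\alpha_i\lvert w_i\rangle\lvert v_i\rangle$ (with $\alpha_i\ge0$, $\{\lvert w_i\rangle\}\subseteq\mathbb{C}^d$ and $\{\lvert v_i\rangle\}\subseteq(\mathbb{C}^d)^{\otimes n-1}$ orthonormal). Set $\rho:=\sum_{i=1}^d\alpha_i^2\lvert w_i\rangle\langle w_i\rvert\otimes\lvert v_i\rangle\langle v_i\rvert$ and $\lvert\psi'\rangle:=\lvert\phi\rangle\otimes\lvert\psi\rangle\in(\mathbb{C}^d)^{\otimes m+n}$, with the qudits of $\lvert\phi\rangle$ numbered $1,\ldots,m$ and those of $\lvert\psi\rangle$ numbered $m+1,\ldots,m+n$. Let $\Pi$ be a projector acting on a subset $\mathcal{S}\subseteq\{1,\ldots,m+n\}$ of the qudits (tensored with the identity elsewhere). If $\Pi$ crosses the Schmidt cut at qudit $m+1$, i.e. $m+1\in\mathcal{S}$ and $\mathcal{S}\cap\{m+2,\ldots,m+n\}\neq\emptyset$, then $\mathrm{Tr}(\Pi\,\lvert\phi\rangle\langle\phi\rvert\otimes\rho)\ge\frac1d\mathrm{Tr}(\Pi\lvert\psi'\rangle\langle\psi'\rvert)$. Otherwise $\mathrm{Tr}(\Pi\,\lvert\phi\rangle\langle\phi\rvert\otimes\rho)=\mathrm{Tr}(\Pi\lvert\psi'\rangle\langle\psi'\rvert)$.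 *)

(* Defs.v *)
(* complex scalars are algC (algebraic complex numbers, with
   conjugation x^* and the partial order of a numClosedFieldType). *)
From HB Require Import structures.
From mathcomp Require Import all_boot all_order all_algebra algC.
Set Implicit Arguments. Unset Strict Implicit. Unset Printing Implicit Defensive.
Import Order.TTheory GRing.Theory Num.Theory.
Local Open Scope ring_scope.

(* Computational basis of (C^d)^{(x) k}: tuples of k digits in {0..d-1}. *)
Definition Idx (d k : nat) := {ffun 'I_k -> 'I_d}.

Definition Vec (d k : nat) := Idx d k -> algC.
Definition Op (d k : nat) := Idx d k -> Idx d k -> algC.

Definition dotp {T : finType} (u v : T -> algC) : algC := \sum_x (u x)^* * v x.
Definition unit_vec {T : finType} (u : T -> algC) : Prop := dotp u u = 1.
Definition orthonormal {I T : finType} (u : I -> T -> algC) : Prop :=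
  forall i j, dotp (u i) (u j) = (i == j)%:R.

Definition proj_on {T : finType} (u : T -> algC) : T -> T -> algC :=
  fun x y => u x * (u y)^*.

Definition trace_mul {T : finType} (A B : T -> T -> algC) : algC :=
  \sum_x \sum_y A x y * B y x.

Definition is_projector {T : finType} (P : T -> T -> algC) : Prop :=
  (forall x y, P y x = (P x y)^*) /\
  (forall x y, \sum_z P x z * P z y = P x y).

(* P acts on the qudits in S, tensored with the identity on the others:
   P x y = Q(x|_S, y|_S) * [x and y agree outside S]. *)
Definition acts_on (d N : nat) (S : {set 'I_N}) (P : Op d N) : Prop :=
  exists Q : Op d N,
    (forall x x' y y' : Idx d N, (forall i, i \in S -> x i = x' i) ->
                       (forall i, i \in S -> y i = y' i) -> Q x y = Q x' y') /\
    (forall x y, P x y = if [forall i, (i \notin S) ==> (x i == y i)]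
                         then Q x y else 0).

(* tensor products along 'I_(m+n) = first m qudits ++ last n qudits *)
Definition left_idx d m n (x : Idx d (m + n)) : Idx d m := [ffun i => x (lshift n i)].
Definition right_idx d m n (x : Idx d (m + n)) : Idx d n := [ffun j => x (rshift m j)].

Definition tens_vec d m n (u : Vec d m) (v : Vec d n) : Vec d (m + n) :=
  fun x => u (left_idx x) * v (right_idx x).
Definition tens_op d m n (A : Op d m) (B : Op d n) : Op d (m + n) :=
  fun x y => A (left_idx x) (left_idx y) * B (right_idx x) (right_idx y).

Definition ord_first n (hn : (0 < n)%N) : 'I_n := Ordinal hn.
Definition tail_idx d n (i0 : 'I_n) (x : Idx d n) : Idx d n.-1 :=
  [ffun j => x (lift i0 j)].

Definition schmidt_decomp d n (i0 : 'I_n) (psi : Vec d n)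
  (alpha : 'I_d -> algC) (w : 'I_d -> 'I_d -> algC) (v : 'I_d -> Vec d n.-1) :=
  [/\ forall i, 0 <= alpha i,
      orthonormal w, orthonormal v &
      forall x, psi x = \sum_i alpha i * w i (x i0) * v i (tail_idx i0 x)].

Definition rho_of d n (i0 : 'I_n)
  (alpha : 'I_d -> algC) (w : 'I_d -> 'I_d -> algC) (v : 'I_d -> Vec d n.-1) : Op d n :=
  fun x y => \sum_i alpha i ^+ 2 * proj_on (w i) (x i0) (y i0)
                                 * proj_on (v i) (tail_idx i0 x) (tail_idx i0 y).

(* Main.v *)
Require Import Defs.
From HB Require Import structures.
From mathcomp Require Import all_boot all_order all_algebra algC.
From mathcomp Require Import ring.
Import Order.TTheory GRing.Theory Num.Theory.
Local Open Scope ring_scope.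
Set Implicit Arguments. Unset Strict Implicit.

Section Idx.
Variables (d m n : nat) (p : 'I_n).

Definition J (a : Idx d m) (c : 'I_d) (t : Idx d n.-1) : Idx d (m + n) :=
  [ffun i => match split i with
             | inl l => a l
             | inr r => if unlift p r is Some j then t j else c end].

Lemma idx3 (i : 'I_(m + n)) :
  [\/ exists l, i = lshift n l, i = rshift m p | exists j, i = rshift m (lift p j)].
Proof.
rewrite -[i]splitK; case: (split i) => [l|r] /=; first by apply: Or31; exists l.
case: (unliftP p r) => [j ->|->]; by [apply: Or33; exists j | exact: Or32].
Qed.

Lemma J_l a c t l : J a c t (lshift n l) = a l.
Proof. by rewrite ffunE -[lshift n l]/(unsplit (inl l)) unsplitK. Qed.
Lemma J_p a c t : J a c t (rshift m p) = c.
Proof. by rewrite ffunE -[rshift m p]/(unsplit (inr p)) unsplitK unlift_none. Qed.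
Lemma J_t a c t j : J a c t (rshift m (lift p j)) = t j.
Proof. by rewrite ffunE -[rshift m _]/(unsplit (inr _)) unsplitK liftK. Qed.

Lemma left_J a c t : left_idx (J a c t) = a.
Proof. by apply/ffunP => l; rewrite ffunE J_l. Qed.
Lemma right_J_p a c t : right_idx (J a c t) p = c.
Proof. by rewrite ffunE J_p. Qed.
Lemma tail_J a c t : tail_idx p (right_idx (J a c t)) = t.
Proof. by apply/ffunP => j; rewrite !ffunE -[rshift m _]/(unsplit (inr _)) unsplitK liftK. Qed.

Lemma J_K (x : Idx d (m + n)) :
  J (left_idx x) (right_idx x p) (tail_idx p (right_idx x)) = x.
Proof.
apply/ffunP => i; case: (idx3 i) => [[l ->]| -> | [j ->]].
- by rewrite J_l ffunE.
- by rewrite J_p ffunE.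
- by rewrite J_t !ffunE.
Qed.

Lemma sum_J (F : Idx d (m + n) -> algC) :
  \sum_x F x = \sum_a \sum_c \sum_t F (J a c t).
Proof.
rewrite (reindex (fun u : Idx d m * ('I_d * Idx d n.-1) => J u.1 u.2.1 u.2.2)) /=; last first.
  exists (fun x => (left_idx x, (right_idx x p, tail_idx p (right_idx x)))).
  - by move=> [a [c t]] _ /=; rewrite left_J right_J_p tail_J.
  - by move=> x _; rewrite J_K.
transitivity (\sum_a \sum_(q : 'I_d * Idx d n.-1) F (J a q.1 q.2)).
  by rewrite pair_big.
by apply: eq_bigr => a _; rewrite pair_big.
Qed.
End Idx.

Lemma Pi_inv d N (S : {set 'I_N}) (Pi : Op d N) (T : pred 'I_N) :
  acts_on S Pi -> (forall i, T i -> i \notin S) ->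
  forall x y x' y' : Idx d N,
  (forall i, ~~ T i -> x i = x' i) -> (forall i, ~~ T i -> y i = y' i) ->
  (forall i, T i -> x i = y i) -> (forall i, T i -> x' i = y' i) ->
  Pi x y = Pi x' y'.
Proof.
move=> [Q [HQ HP]] HT x y x' y' Hx Hy Hxy Hx'y'.
rewrite !HP.
have -> : [forall i, (i \notin S) ==> (x i == y i)] =
          [forall i, (i \notin S) ==> (x' i == y' i)].
  apply: eq_forallb => i; case: (boolP (T i)) => Ti.
    by rewrite Hxy // Hx'y' // !eqxx !implybT.
  by rewrite Hx // Hy.
case: ifP => // _; apply: HQ => i iS.
- apply: Hx; apply/negP => Ti; by move: (HT i Ti); rewrite iS.
- apply: Hy; apply/negP => Ti; by move: (HT i Ti); rewrite iS.
Qed.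

Lemma Pi_zero d N (S : {set 'I_N}) (Pi : Op d N) i (x y : Idx d N) :
  acts_on S Pi -> i \notin S -> x i != y i -> Pi x y = 0.
Proof.
move=> [Q [HQ HP]] iS nxy; rewrite HP; case: forallP => // H.
by move: (H i); rewrite iS /= (negbTE nxy).
Qed.

Lemma proj_ge0 (T : finType) (P : T -> T -> algC) (u : T -> algC) :
  is_projector P -> 0 <= \sum_x \sum_y P x y * (u y * (u x)^*).
Proof.
move=> [Hs Hi].
have -> : \sum_x \sum_y P x y * (u y * (u x)^*) =
          \sum_z (\sum_y P z y * u y) * (\sum_x P z x * u x)^*.
  transitivity (\sum_x \sum_y \sum_z (P z x)^* * P z y * (u y * (u x)^*)).
    apply: eq_bigr => x _; apply: eq_bigr => y _.
    rewrite -Hi mulr_suml; apply: eq_bigr => z _; by rewrite Hs.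
  under eq_bigr do rewrite exchange_big /=.
  rewrite exchange_big /=; apply: eq_bigr => z _.
  rewrite exchange_big /= mulr_suml; apply: eq_bigr => y _.
  rewrite rmorph_sum mulr_sumr; apply: eq_bigr => x _.
  rewrite rmorphM /=; ring.
by apply: sumr_ge0 => z _; apply: mul_conjC_ge0.
Qed.

Lemma trace_zero (A C T I : finType) (F : A -> C -> T -> A -> C -> T -> algC)
  (Phi : A -> A -> algC) (e : I -> C -> T -> algC) (beta : I -> I -> algC) (c0 : C) :
  (forall a c t a' c' t', c != c' -> F a c t a' c' t' = 0) ->
  (forall a c t a' t', F a c t a' c t' = F a c0 t a' c0 t') ->
  (forall i j t t', i != j -> \sum_c e i c t' * (e j c t)^* = 0) ->
  (forall i, beta i i = 0) ->
  \sum_a \sum_c \sum_t \sum_a' \sum_c' \sum_t' F a c t a' c' t' *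
     (Phi a' a * \sum_i \sum_j beta i j * (e i c' t' * (e j c t)^*)) = 0.
Proof.
move=> H0 H1 He Hb.
transitivity (\sum_a \sum_c \sum_t \sum_a' \sum_t' F a c0 t a' c0 t' *
     (Phi a' a * \sum_i \sum_j beta i j * (e i c t' * (e j c t)^*))).
  apply: eq_bigr => a _; apply: eq_bigr => c _; apply: eq_bigr => t _.
  apply: eq_bigr => a' _; rewrite (bigD1 c) //= [X in _ + X]big1 ?addr0.
    by apply: eq_bigr => t' _; rewrite H1.
  move=> c' nc; apply: big1 => t' _; by rewrite H0 ?mul0r // eq_sym.
apply: big1 => a _; rewrite exchange_big; apply: big1 => t _.
rewrite exchange_big; apply: big1 => a' _.
rewrite exchange_big; apply: big1 => t' _.
rewrite -mulr_sumr -mulr_sumr.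
suff -> : \sum_c \sum_i \sum_j beta i j * (e i c t' * (e j c t)^*) = 0
  by rewrite !mulr0.
rewrite exchange_big; apply: big1 => i _.
rewrite exchange_big; apply: big1 => j _.
rewrite -mulr_sumr; case: (eqVneq i j) => [->|nij].
  by rewrite Hb mul0r.
by rewrite He // mulr0.
Qed.



Lemma eq_iden d (a b : 'I_d -> algC) :
  \sum_i \sum_j ((i == j)%:R - 1) * (a i * (b j)^*) =
  \sum_i a i * (b i)^* - (\sum_i a i) * (\sum_i b i)^*.
Proof.
under eq_bigr do under eq_bigr do rewrite mulrBl mul1r.
under eq_bigr do rewrite sumrB.
rewrite sumrB; congr (_ - _).
  apply: eq_bigr => i _; rewrite (bigD1 i) //= eqxx mul1r big1 ?addr0 //.
  by move=> j /negbTE; rewrite eq_sym => ->; rewrite mul0r.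
rewrite rmorph_sum mulr_suml; apply: eq_bigr => i _; by rewrite mulr_sumr.
Qed.

Lemma sq_iden d (a b : 'I_d -> algC) : (0 < d)%N ->
  \sum_(i < d) a i * (b i)^* - d%:R^-1 * ((\sum_(i < d) a i) * (\sum_(i < d) b i)^*) =
  (2 * d)%:R^-1 * \sum_(i < d) \sum_(j < d) (a i - a j) * (b i - b j)^*.
Proof.
move=> hd.
have E1 : \sum_(i < d) \sum_(j < d) (a i - a j) * (b i - b j)^* =
   (\sum_(i < d) \sum_(j < d) a i * (b i)^* - \sum_(i < d) \sum_(j < d) a i * (b j)^*) -
   (\sum_(i < d) \sum_(j < d) a j * (b i)^* - \sum_(i < d) \sum_(j < d) a j * (b j)^*).
  rewrite -!sumrB; apply: eq_bigr => i _; rewrite -!sumrB; apply: eq_bigr => j _.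
  by rewrite rmorphB /= mulrBl !mulrBr.
have E2 : forall f : 'I_d -> algC, \sum_(i < d) \sum_(j < d) f i = d%:R * \sum_(i < d) f i.
  move=> f; rewrite mulr_sumr; apply: eq_bigr => i _.
  by rewrite sumr_const card_ord mulr_natl.
have E3 : \sum_(i < d) \sum_(j < d) a i * (b j)^* = (\sum_(i < d) a i) * (\sum_(i < d) b i)^*.
  rewrite rmorph_sum mulr_suml; apply: eq_bigr => i _; by rewrite mulr_sumr.
have E4 : \sum_(i < d) \sum_(j < d) a j * (b i)^* = (\sum_(i < d) a i) * (\sum_(i < d) b i)^*.
  by rewrite exchange_big.
have E5 : \sum_(i < d) \sum_(j < d) a j * (b j)^* = d%:R * \sum_(i < d) a i * (b i)^*.
  by rewrite sumr_const card_ord mulr_natl.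
rewrite E1 E2 E3 E4 E5.
have hd0 : d%:R != 0 :> algC by rewrite pnatr_eq0 -lt0n.
have h2 : (2 * d)%:R = 2 * d%:R :> algC by rewrite natrM.
rewrite h2.
set A := \sum_(i < d) a i * (b i)^*; set B := (\sum_(i < d) a i) * (\sum_(i < d) b i)^*.
by field.
Qed.

Lemma sum_J2 d m n (p : 'I_n) (G : Idx d (m + n) -> Idx d (m + n) -> algC) :
  \sum_x \sum_y G x y =
  \sum_a \sum_c \sum_t \sum_a' \sum_c' \sum_t' G (J p a c t) (J p a' c' t').
Proof.
rewrite (sum_J p); do 3 (apply: eq_bigr => ? _); by rewrite (sum_J p).
Qed.

Lemma sum_J2' d m n (p : 'I_n) (G : Idx d (m + n) -> Idx d (m + n) -> algC) :
  \sum_x \sum_y G x y =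
  \sum_a \sum_t \sum_c \sum_a' \sum_t' \sum_c' G (J p a c t) (J p a' c' t').
Proof.
rewrite (sum_J2 p); apply: eq_bigr => a _; rewrite exchange_big; do 2 (apply: eq_bigr => ? _).
apply: eq_bigr => a' _; by rewrite exchange_big.
Qed.

Lemma swap4 (I J X Y : finType) (G : I -> J -> X -> Y -> algC) :
  \sum_i \sum_j \sum_x \sum_y G i j x y = \sum_x \sum_y \sum_i \sum_j G i j x y.
Proof.
transitivity (\sum_(q : I * J) \sum_(r : X * Y) G q.1 q.2 r.1 r.2).
  rewrite pair_big /=; apply: eq_bigr => q _; by rewrite pair_big.
rewrite exchange_big /= [RHS]pair_big /=; apply: eq_bigr => r _; by rewrite pair_big.
Qed.

Theorem corollary2 (d m n : nat) (hm : (1 <= m)%N) (hn : (2 <= n)%N)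
  (phi : Vec d m) (psi : Vec d n)
  (alpha : 'I_d -> algC) (w : 'I_d -> 'I_d -> algC) (v : 'I_d -> Vec d n.-1)
  (S : {set 'I_(m + n)}) (Pi : Op d (m + n)) :
  unit_vec phi -> unit_vec psi ->
  schmidt_decomp (ord_first (ltnW hn)) psi alpha w v ->
  is_projector Pi -> acts_on S Pi ->
  let rho := rho_of (ord_first (ltnW hn)) alpha w v in
  let psi' := tens_vec phi psi in
  let crosses := (rshift m (ord_first (ltnW hn)) \in S) &&
                 [exists j, rshift m (lift (ord_first (ltnW hn)) j) \in S] in
  (crosses ->
     trace_mul Pi (tens_op (proj_on phi) rho)
       >= d%:R^-1 * trace_mul Pi (proj_on psi')) /\
  (~~ crosses ->
     trace_mul Pi (tens_op (proj_on phi) rho) = trace_mul Pi (proj_on psi')).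
Proof.
move=> Hphi Hpsi [Hal Hw Hv Hpsie] HPi Hact rho psi' crosses.
set p := ord_first (ltnW hn).
destruct d as [|d].
  have T0 : forall A B : Op 0 (m + n), trace_mul A B = 0.
    by move=> A B; apply: big1 => x _; case: (x (lshift n (Ordinal hm))).
  by rewrite !T0 mulr0 lexx; split.
pose e i (r : Idx d.+1 n) := w i (r p) * v i (tail_idx p r).
have Hrho : forall r r', rho r r' = \sum_i (alpha i * e i r) * (alpha i * e i r')^*.
  move=> r r'; rewrite /rho /rho_of /proj_on; apply: eq_bigr => i _.
  rewrite -/p /e !rmorphM /= (geC0_conj (Hal i)); ring.
have Hpsi' : forall r, psi r = \sum_i alpha i * e i r.
  by move=> r; rewrite Hpsie; apply: eq_bigr => i _; rewrite /e mulrA.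
split.
  move=> _; rewrite -subr_ge0.
  pose u i j (z : Idx d.+1 (m + n)) := phi (left_idx z) *
     (alpha i * e i (right_idx z) - alpha j * e j (right_idx z)).
  have -> : trace_mul Pi (tens_op (proj_on phi) rho) -
            d.+1%:R^-1 * trace_mul Pi (proj_on psi') =
            (2 * d.+1)%:R^-1 * \sum_i \sum_j \sum_x \sum_y Pi x y * (u i j y * (u i j x)^*).
    rewrite swap4 /trace_mul [d.+1%:R^-1 * _]mulr_sumr [(2 * d.+1)%:R^-1 * _]mulr_sumr.
    rewrite -sumrB; apply: eq_bigr => x _.
    rewrite [d.+1%:R^-1 * _]mulr_sumr [(2 * d.+1)%:R^-1 * _]mulr_sumr -sumrB.
    apply: eq_bigr => y _.
    under eq_bigr do rewrite -mulr_sumr.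
    rewrite -mulr_sumr [d.+1%:R^-1 * _]mulrCA -mulrBr [RHS]mulrCA; congr (_ * _).
    rewrite /tens_op /proj_on /psi' /tens_vec Hrho !Hpsi'.
    have -> : \sum_i \sum_j u i j y * (u i j x)^* =
       phi (left_idx y) * (phi (left_idx x))^* *
       \sum_i \sum_j (alpha i * e i (right_idx y) - alpha j * e j (right_idx y)) *
                     (alpha i * e i (right_idx x) - alpha j * e j (right_idx x))^*.
      rewrite mulr_sumr; apply: eq_bigr => i _; rewrite mulr_sumr; apply: eq_bigr => j _.
      rewrite /u rmorphM /=; ring.
    rewrite [RHS]mulrCA -sq_iden // rmorphM /=; ring.
  apply: mulr_ge0; first by rewrite invr_ge0 ler0n.
  apply: sumr_ge0 => i _; apply: sumr_ge0 => j _; exact: proj_ge0.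
move=> Hnc; apply/eqP; rewrite -subr_eq0; apply/eqP.
pose beta i j := alpha i * alpha j * ((i == j)%:R - 1).
have -> : trace_mul Pi (tens_op (proj_on phi) rho) - trace_mul Pi (proj_on psi') =
   \sum_x \sum_y Pi x y * ((phi (left_idx y) * (phi (left_idx x))^*) *
      \sum_i \sum_j beta i j * (e i (right_idx y) * (e j (right_idx x))^*)).
  rewrite /trace_mul -sumrB; apply: eq_bigr => x _; rewrite -sumrB; apply: eq_bigr => y _.
  rewrite -mulrBr; congr (_ * _).
  rewrite /tens_op /proj_on /psi' /tens_vec Hrho !Hpsi'.
  have -> : \sum_i \sum_j beta i j * (e i (right_idx y) * (e j (right_idx x))^*) =
     \sum_i \sum_j ((i == j)%:R - 1) * ((alpha i * e i (right_idx y)) *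
                                        (alpha j * e j (right_idx x))^*).
    apply: eq_bigr => i _; apply: eq_bigr => j _.
    have hc : forall z, (alpha j * z)^* = alpha j * z^* by move=> z; rewrite rmorphM /= (geC0_conj (Hal j)).
    by rewrite /beta hc; ring.
  rewrite eq_iden rmorphM /=; ring.
move: Hnc; rewrite /crosses negb_and => /orP [Hk|Hrest].
- rewrite (sum_J2 p).
  transitivity (\sum_a \sum_c \sum_t \sum_a' \sum_c' \sum_t'
       Pi (J p a c t) (J p a' c' t') * ((phi a' * (phi a)^*) *
       \sum_i \sum_j beta i j * ((w i c' * v i t') * (w j c * v j t)^*))).
    by do 6 (apply: eq_bigr => ? _); rewrite /e !left_J !right_J_p !tail_J.
  apply: (@trace_zero _ _ _ _ (fun a c t a' c' t' => Pi (J p a c t) (J p a' c' t'))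
            (fun a' a => phi a' * (phi a)^*) (fun i c t => w i c * v i t) beta ord0).
  + move=> a c t a' c' t' ncc; apply: (Pi_zero (i := rshift m p)) Hact Hk _.
    by rewrite !J_p.
  + move=> a c t a' t'; apply: (Pi_inv (T := pred1 (rshift m p)) Hact).
    * by move=> i /eqP ->.
    * move=> i; case: (idx3 p i) => [[l ->]|->|[j ->]] /=; rewrite ?eqxx // => _;
      by rewrite ?J_l ?J_t.
    * move=> i; case: (idx3 p i) => [[l ->]|->|[j ->]] /=; rewrite ?eqxx // => _;
      by rewrite ?J_l ?J_t.
    * by move=> i /eqP ->; rewrite !J_p.
    * by move=> i /eqP ->; rewrite !J_p.
  + move=> i j t t' nij /=.
    rewrite (eq_bigr (fun c => v i t' * (v j t)^* * ((w j c)^* * w i c))); last first.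
      by move=> c _; rewrite rmorphM /=; ring.
    by rewrite -mulr_sumr; have := Hw j i; rewrite /dotp => ->; rewrite eq_sym (negbTE nij) mulr0.
  + by move=> i; rewrite /beta eqxx subrr mulr0.
- move/existsPn: Hrest => Hrest.
  rewrite (sum_J2' p).
  transitivity (\sum_a \sum_t \sum_c \sum_a' \sum_t' \sum_c'
       Pi (J p a c t) (J p a' c' t') * ((phi a' * (phi a)^*) *
       \sum_i \sum_j beta i j * ((w i c' * v i t') * (w j c * v j t)^*))).
    by do 6 (apply: eq_bigr => ? _); rewrite /e !left_J !right_J_p !tail_J.
  apply: (@trace_zero _ _ _ _ (fun a t c a' t' c' => Pi (J p a c t) (J p a' c' t'))
            (fun a' a => phi a' * (phi a)^*) (fun i t c => w i c * v i t) beta [ffun => ord0]).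
  + move=> a t c a' t' c' ntt.
    have [j ntj] : exists j, t j != t' j.
      by apply/existsP; move: ntt; apply: contraR => /existsPn H; apply/eqP/ffunP => j; apply/eqP; move: (H j); rewrite negbK.
    apply: (Pi_zero (i := rshift m (lift p j))) Hact (Hrest j) _.
    by rewrite !J_t.
  + move=> a t c a' c'.
    apply: (Pi_inv (T := fun i => [exists j, i == rshift m (lift p j)]) Hact).
    * by move=> i /existsP [j /eqP ->].
    * move=> i; case: (idx3 p i) => [[l ->]|->|[j ->]] /=; rewrite ?J_l ?J_p //.
      by move/existsPn/(_ j); rewrite eqxx.
    * move=> i; case: (idx3 p i) => [[l ->]|->|[j ->]] /=; rewrite ?J_l ?J_p //.
      by move/existsPn/(_ j); rewrite eqxx.
    * by move=> i /existsP [j /eqP ->]; rewrite !J_t.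
    * by move=> i /existsP [j /eqP ->]; rewrite !J_t.
  + move=> i j c c' nij /=.
    rewrite (eq_bigr (fun t => w i c' * (w j c)^* * ((v j t)^* * v i t))); last first.
      by move=> t _; rewrite rmorphM /=; ring.
    by rewrite -mulr_sumr; have := Hv j i; rewrite /dotp => ->; rewrite eq_sym (negbTE nij) mulr0.
  + by move=> i; rewrite /beta eqxx subrr mulr0.
Qed.
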